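(* In the two-parallel-path setting with the linear decision rule, suppose $l_v=0$ for all vertices, $m<n$, all initial pheromone levels are positive, the inputs $f_s(t),b_d(t)$ are positive and non-decreasing in $t$, and the initial flows at vertices other than $s,d$ satisfy $f_v(0)\le f_s(0)$, $b_v(0)\le b_d(0)$. Let $T_1=\max_{(u,v)\in E}\log(p_{uv}(0)/(f_s(0)+b_d(0)))/\log(1/\delta)$. Then for every integer $t\ge L+\max(0,T_1)$, $$r_{ss_1}(t+1)\ \ge\ r_{\min}(t)\left(1+\frac{(1-\delta)\big(b_d(t-m+1)-b_d(t-n+1)\big)}{6\big(f_s(t)+b_d(t)\big)}\right).$$
   Context: Model (linear decision rule). Directed graph $G=(V,E)$, source $s$, destination $d$, discrete time; pheromone $p_{uv}(t)$, forward flows $f_v(t)$, backward flows $b_v(t)$; leakages $l_v\in[0,1]$; decay $\delta\in(0,1)$; exogenous inputs $f_s(t),b_d(t)$. Edge flows: $f_{uv}(t)=f_u(t)p_{uv}(t)/\sum_{z:(u,z)\in E}p_{uz}(t)$, $b_{uv}(t)=b_v(t)p_{uv}(t)/\sum_{z:(z,v)\in E}p_{zv}(t)$ (at a vertex with a single outgoing, resp. incoming, edge the whole flow goes along it). Updates: $f_v(t+1)=(1-l_v)\sum_{z:(z,v)\in E}f_{zv}(t)$ for $v\neq s$, $b_u(t+1)=(1-l_u)\sum_{z:(u,z)\in E}b_{uz}(t)$ for $u\ne d$, $p_{uv}(t+1)=\delta(p_{uv}(t)+f_{uv}(t)+b_{uv}(t))$. Two parallel paths: $G$ is the union of directed paths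 $P_1,P_2$ from $s$ to $d$ sharing only $s,d$; $s_1,s_2$ are the successors of $s$ and $d_1,d_2$ the predecessors of $d$ on $P_1,P_2$; $m=\mathrm{len}(P_1)$, $n=\mathrm{len}(P_2)$ (numbers of edges), $L=\max(m,n)$. Potential: $r_{ss_1}(t)=p_{ss_1}(t)/p_{ss_2}(t)$, $r_{d_1d}(t)=p_{d_1d}(t)/p_{d_2d}(t)$, and for $t\ge L$, $r_{\min}(t)=\min\{r_{ss_1}(t-i),\,r_{d_1d}(t-i):0\le i\le L-1\}$. *)

(* Defs.v *)
From HB Require Import structures.
From mathcomp Require Import all_boot all_order all_algebra.
From mathcomp Require Import all_classical all_reals exp.
Set Implicit Arguments. Unset Strict Implicit. Unset Printing Implicit Defensive.
Import Order.TTheory GRing.Theory Num.Theory.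
Local Open Scope ring_scope.

Section Model.
Variables (R : realType) (V : finType) (E : rel V).

Definition fedge (p : V -> V -> R) (f : V -> R) (u v : V) : R :=
  if #|[pred z | E u z]| == 1%N then f u
  else f u * p u v / (\sum_(z | E u z) p u z).

Definition bedge (p : V -> V -> R) (b : V -> R) (u v : V) : R :=
  if #|[pred z | E z v]| == 1%N then b v
  else b v * p u v / (\sum_(z | E z v) p z v).

(* (p, f, b) is a trajectory of the linear-decision-rule dynamics with
   source s, destination d, leakages l and decay delta; f t s and b t d
   are the exogenous inputs (left unconstrained by the dynamics). *)
Definition is_trajectory (s d : V) (l : V -> R) (delta : R)
    (p : nat -> V -> V -> R) (f b : nat -> V -> R) : Prop :=
  forall t : nat,
    (forall v, v != s ->
       f t.+1 v = (1 - l v) * \sum_(z | E z v) fedge (p t) (f t) z v) /\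
    (forall u, u != d ->
       b t.+1 u = (1 - l u) * \sum_(z | E u z) bedge (p t) (b t) u z) /\
    (forall u v, E u v ->
       p t.+1 u v = delta * (p t u v + fedge (p t) (f t) u v + bedge (p t) (b t) u v)).
End Model.

(* Vertices: inl true = s, inl false = d,
   inr (inl i) = the (i+1)-th vertex of P1 (internal, i < m-1),
   inr (inr j) = the (j+1)-th vertex of P2 (internal, j < n-1). *)
Definition TPV (m n : nat) : finType :=
  (bool + ('I_(m.-1) + 'I_(n.-1)))%type.

Definition src {m n : nat} : TPV m n := inl true.
Definition dst {m n : nat} : TPV m n := inl false.

(* k-th vertex of P1 (k = 0..m), resp. of P2 (k = 0..n) *)
Definition pos1 (m n : nat) (k : nat) : TPV m n :=
  if k == 0%N then src
  else if (insub k.-1 : option 'I_(m.-1)) is Some i then inr (inl i) else dst.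
Definition pos2 (m n : nat) (k : nat) : TPV m n :=
  if k == 0%N then src
  else if (insub k.-1 : option 'I_(n.-1)) is Some j then inr (inr j) else dst.

Definition TPE (m n : nat) : rel (TPV m n) := fun u v =>
  [exists i : 'I_m, (u == pos1 m n i) && (v == pos1 m n i.+1)] ||
  [exists j : 'I_n, (u == pos2 m n j) && (v == pos2 m n j.+1)].

Section Potential.
Variables (R : realType) (m n : nat) (p : nat -> TPV m n -> TPV m n -> R).

Definition s1 : TPV m n := pos1 m n 1.
Definition s2 : TPV m n := pos2 m n 1.
Definition d1 : TPV m n := pos1 m n m.-1.
Definition d2 : TPV m n := pos2 m n n.-1.

Definition r_ss1 (t : nat) : R := p t src s1 / p t src s2.
Definition r_d1d (t : nat) : R := p t d1 dst / p t d2 dst.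

Definition Lmax : nat := maxn m n.

Definition r_min (t : nat) : R :=
  \big[Num.min/r_ss1 t]_(i < Lmax) Num.min (r_ss1 (t - i)) (r_d1d (t - i)).
End Potential.

Definition T1 (R : realType) (m n : nat) (delta : R)
    (p : nat -> TPV m n -> TPV m n -> R) (f b : nat -> TPV m n -> R) : R :=
  let g := fun u v => ln (p 0%N u v / (f 0%N src + b 0%N dst)) / ln (1 / delta) in
  \big[Num.max/g src (s1 m n)]_(e : TPV m n * TPV m n | TPE e.1 e.2) g e.1 e.2.

(* Main.v *)
Require Import Defs.
From HB Require Import structures.
From mathcomp Require Import all_boot all_order all_algebra.
From mathcomp Require Import all_classical all_reals exp.
From mathcomp Require Import ring lra zify.
Import Order.TTheory GRing.Theory Num.Theory.
Local Open Scope ring_scope.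
Section Graph.
Variables (m n : nat).
Hypothesis m0 : (0 < m)%N.
Hypothesis mn : (m < n)%N.

Lemma pos1_src k : (pos1 m n k == src) = (k == 0)%N.
Proof. rewrite /pos1; case: k => [|k] //=; by case: insubP. Qed.
Lemma pos1_dst k : (pos1 m n k == dst) = (m <= k)%N.
Proof.
rewrite /pos1; case: k => [|k] /=; first by rewrite leqNgt ?m0 ?(ltn_trans m0 mn).
case: insubP => [i Hi _|Hn] /=; apply/esym; [apply/negbTE; move: Hi; lia|rewrite eqxx; apply/idP; move: Hn; lia].
Qed.
Lemma pos1_int k i : (pos1 m n k == inr (inl i)) = (k == i.+1)%N.
Proof.
rewrite /pos1; case: k => [|k] //=. case: insubP => [i' Hi' Hv|Hn] /=.
- by rewrite eqSS -Hv; apply/eqP/eqP => [[->]|/val_inj->].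
- apply/esym/negbTE; move: Hn (ltn_ord i); lia.
Qed.
Lemma pos1_int2 k j : (pos1 m n k == inr (inr j)) = false.
Proof. rewrite /pos1; case: k => [|k] //=; by case: insubP. Qed.
Lemma pos2_src k : (pos2 m n k == src) = (k == 0)%N.
Proof. rewrite /pos2; case: k => [|k] //=; by case: insubP. Qed.
Lemma pos2_dst k : (pos2 m n k == dst) = (n <= k)%N.
Proof.
rewrite /pos2; case: k => [|k] /=; first by rewrite leqNgt ?m0 ?(ltn_trans m0 mn).
case: insubP => [i Hi _|Hn] /=; apply/esym; [apply/negbTE; move: Hi; lia|rewrite eqxx; apply/idP; move: Hn; lia].
Qed.
Lemma pos2_int k i : (pos2 m n k == inr (inr i)) = (k == i.+1)%N.
Proof.
rewrite /pos2; case: k => [|k] //=. case: insubP => [i' Hi' Hv|Hn] /=.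
- by rewrite eqSS -Hv; apply/eqP/eqP => [[->]|/val_inj->].
- apply/esym/negbTE; move: Hn (ltn_ord i); lia.
Qed.
Lemma pos2_int1 k j : (pos2 m n k == inr (inl j)) = false.
Proof. rewrite /pos2; case: k => [|k] //=; by case: insubP. Qed.

Lemma TPEP u v : reflect
  ((exists k, (k < m)%N /\ u = pos1 m n k /\ v = pos1 m n k.+1) \/
   (exists k, (k < n)%N /\ u = pos2 m n k /\ v = pos2 m n k.+1)) (TPE u v).
Proof.
apply: (iffP orP) => [[/existsP[i /andP[/eqP-> /eqP->]]|/existsP[i /andP[/eqP-> /eqP->]]]|].
- by left; exists i.
- by right; exists i.
case=> [[k [Hk [-> ->]]]|[k [Hk [-> ->]]]].
- by left; apply/existsP; exists (Ordinal Hk); rewrite !eqxx.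
- by right; apply/existsP; exists (Ordinal Hk); rewrite !eqxx.
Qed.

Local Notation E := (@TPE m n).
Local Notation P1 := (pos1 m n).
Local Notation P2 := (pos2 m n).
Lemma n0 : (0 < n)%N. Proof. lia. Qed.

Lemma E_src z : E src z = (z == P1 1) || (z == P2 1).
Proof.
apply/TPEP/orP.
- case=> [[k [Hk [/esym/eqP Hu ->]]]|[k [Hk [/esym/eqP Hu ->]]]].
  + by rewrite pos1_src in Hu; move/eqP: Hu => ->; left.
  + by rewrite pos2_src in Hu; move/eqP: Hu => ->; right.
- case=> /eqP->; [left|right]; exists 0%N; split=> //; lia.
Qed.

Lemma E_dst z : E z dst = (z == P1 m.-1) || (z == P2 n.-1).
Proof.
apply/TPEP/orP.
- case=> [[k [Hk [-> /esym/eqP Hu]]]|[k [Hk [-> /esym/eqP Hu]]]].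
  + rewrite pos1_dst in Hu; have -> : k = m.-1 by lia. by left.
  + rewrite pos2_dst in Hu; have -> : k = n.-1 by lia. by right.
- case=> /eqP->; [left; exists m.-1|right; exists n.-1]; (split; [lia|split=>//]);
  apply/esym/eqP; rewrite ?pos1_dst ?pos2_dst; lia.
Qed.

Lemma E_dst_out z : E dst z = false.
Proof.
apply/negbTE/negP => /TPEP [[k [Hk [/esym/eqP Hu _]]]|[k [Hk [/esym/eqP Hu _]]]];
  move: Hu; rewrite ?pos1_dst ?pos2_dst; lia.
Qed.

Lemma E_src_in z : E z src = false.
Proof.
apply/negbTE/negP => /TPEP [[k [Hk [_ /esym/eqP Hu]]]|[k [Hk [_ /esym/eqP Hu]]]];
  move: Hu; by rewrite ?pos1_src ?pos2_src.
Qed.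

Lemma E_int1_out i z : E (inr (inl i)) z = (z == P1 i.+2).
Proof.
apply/TPEP/idP.
- case=> [[k [Hk [/esym/eqP Hu ->]]]|[k [Hk [/esym/eqP Hu _]]]].
  + by rewrite pos1_int in Hu; move/eqP: Hu => ->.
  + by rewrite pos2_int1 in Hu.
- move/eqP->; left; exists i.+1; split; first by move: (ltn_ord i); lia.
  split=> //; apply/esym/eqP; by rewrite pos1_int.
Qed.

Lemma E_int1_in i z : E z (inr (inl i)) = (z == P1 i).
Proof.
apply/TPEP/idP.
- case=> [[k [Hk [-> /esym/eqP Hu]]]|[k [Hk [_ /esym/eqP Hu]]]].
  + by rewrite pos1_int eqSS in Hu; move/eqP: Hu => ->.
  + by rewrite pos2_int1 in Hu.
- move/eqP->; left; exists i; split; first by move: (ltn_ord i); lia.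
  split=> //; apply/esym/eqP; by rewrite pos1_int.
Qed.

Lemma E_int2_out i z : E (inr (inr i)) z = (z == P2 i.+2).
Proof.
apply/TPEP/idP.
- case=> [[k [Hk [/esym/eqP Hu _]]]|[k [Hk [/esym/eqP Hu ->]]]].
  + by rewrite pos1_int2 in Hu.
  + by rewrite pos2_int in Hu; move/eqP: Hu => ->.
- move/eqP->; right; exists i.+1; split; first by move: (ltn_ord i); lia.
  split=> //; apply/esym/eqP; by rewrite pos2_int.
Qed.

Lemma E_int2_in i z : E z (inr (inr i)) = (z == P2 i).
Proof.
apply/TPEP/idP.
- case=> [[k [Hk [_ /esym/eqP Hu]]]|[k [Hk [-> /esym/eqP Hu]]]].
  + by rewrite pos1_int2 in Hu.
  + by rewrite pos2_int eqSS in Hu; move/eqP: Hu => ->.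
- move/eqP->; right; exists i; split; first by move: (ltn_ord i); lia.
  split=> //; apply/esym/eqP; by rewrite pos2_int.
Qed.

Lemma int_in v : v != src -> v != dst -> exists u, u != dst /\ forall z, E z v = (z == u).
Proof.
case: v => [[]|[i|i]] // _ _.
- exists (P1 i); split; last exact: E_int1_in. rewrite pos1_dst; move: (ltn_ord i); lia.
- exists (P2 i); split; last exact: E_int2_in. rewrite pos2_dst; move: (ltn_ord i); lia.
Qed.

Lemma int_out v : v != src -> v != dst -> exists w, w != src /\ forall z, E v z = (z == w).
Proof.
case: v => [[]|[i|i]] // _ _.
- exists (P1 i.+2); split; last exact: E_int1_out. by rewrite pos1_src.
- exists (P2 i.+2); split; last exact: E_int2_out. by rewrite pos2_src.
Qed.

Lemma s12_neq : P1 1 != P2 1.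
Proof.
have Hn1 : (0 < n.-1)%N by lia.
have : P2 1 == inr (inr (Ordinal Hn1)) by rewrite pos2_int.
move/eqP->. by rewrite pos1_int2.
Qed.

Lemma d12_neq : P1 m.-1 != P2 n.-1.
Proof.
have Hn1 : (n.-2 < n.-1)%N by lia.
have : P2 n.-1 == inr (inr (Ordinal Hn1)) by rewrite pos2_int /=; apply/eqP; lia.
move/eqP->. by rewrite pos1_int2.
Qed.

End Graph.


Lemma final_ineq (R : realFieldType) (d r P1 P2 F B b1 b2 a1 c1 a2 c2 : R) :
 0 < d -> d < 1 -> 0 < r -> 0 < P1 -> 0 < P2 -> 0 < F -> 0 < B -> 0 <= b2 -> b2 <= b1 -> b1 <= B ->
 0 < a1 -> 0 < c1 -> 0 < a2 -> 0 < c2 -> r * P2 <= P1 -> r * c1 <= a1 -> r * c2 <= a2 ->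
 P1 + P2 <= 2 * (F + B) / (1 - d) ->
 r * (1 + (1 - d) * (b1 - b2) / (6 * (F + B))) <=
 (d * (P1 + F * (P1 / (P1 + P2)) + b1 * (a1 / (a1 + c1)))) /
 (d * (P2 + F * (P2 / (P1 + P2)) + b2 * (c2 / (a2 + c2)))).
Proof.
move=> d0 d1 r0 p10 p20 F0 B0 b20 b21 b1B a10 c10 a20 c20 h1 h2 h3 hS.
have S0 : 0 < P1 + P2 by lra.
have hq1 : r <= a1 / (a1 + c1) * (1 + r).
  by rewrite mulrAC ler_pdivlMr; [nra|lra].
have q10 : 0 <= a1 / (a1 + c1) by apply: divr_ge0; lra.
have hq2 : c2 / (a2 + c2) * (1 + r) <= 1.
  by rewrite mulrAC ler_pdivrMr; [nra|lra].
have q20 : 0 <= c2 / (a2 + c2) by apply: divr_ge0; lra.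
have hw : P2 / (P1 + P2) * (1 + r) <= 1.
  by rewrite mulrAC ler_pdivrMr; [nra|lra].
have hu : r * (P2 / (P1 + P2)) <= P1 / (P1 + P2).
  by rewrite mulrA ler_pdivlMr // mulrAC -mulrA divff ?mulr1 //; lra.
have w0 : 0 <= P2 / (P1 + P2) by apply: divr_ge0; lra.
set q1 := a1 / (a1 + c1) in hq1 q10 *.
set q2 := c2 / (a2 + c2) in hq2 q20 *.
set u := P1 / (P1 + P2) in hu *.
set w := P2 / (P1 + P2) in hw w0 hu *.
clearbody q1 q2 u w.
have hN : r * (b1 - b2) <= (1 + r) * ((P1 + F * u + b1 * q1) - r * (P2 + F * w + b2 * q2)).
  have e1 : 0 <= (1 + r) * (P1 - r * P2) by apply: mulr_ge0; lra.
  have e2 : 0 <= (1 + r) * F * (u - r * w).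
    have g1 : 0 <= (1 + r) * F by apply: mulr_ge0; lra.
    have g2 : 0 <= u - r * w by lra.
    exact: mulr_ge0.
  have e3 : r * b1 <= b1 * (q1 * (1 + r)) by rewrite mulrC; apply: ler_wpM2l; lra.
  have rb : 0 <= r * b2 by apply: mulr_ge0; lra.
  have e4 : r * b2 * (q2 * (1 + r)) <= r * b2 by rewrite -{2}(mulr1 (r*b2)); apply: ler_wpM2l.
  move: e1 e2 e3 e4; clear; move=> e1 e2 e3 e4; lra.
set M := F + B in hS *.
set D := P2 + F * w + b2 * q2 in hN *.
set N := P1 + F * u + b1 * q1 in hN *.
have D0 : 0 < D by rewrite /D; nra.
have -> : d * N / (d * D) = N / D.
  by rewrite -mulf_div divff ?mul1r //; lra.
rewrite ler_pdivlMr //.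
have M0 : 0 < M by rewrite /M; lra.
have hM : M <= M / (1 - d) by rewrite ler_pdivlMr; nra.
have hD : (1 + r) * D <= 3 * M / (1 - d).
  have e : 3 * M / (1 - d) = 2 * M / (1 - d) + M / (1 - d) by rewrite -mulrDl; congr (_ * _); ring.
  rewrite e /D; have : (1 + r) * (b2 * q2) <= b2 by nra.
  have : (1 + r) * (F * w) <= F by nra.
  have : (1 + r) * P2 <= P1 + P2 by nra.
  move: hM hS; rewrite /M; move: (2 * (F + B) / (1 - d)) ((F + B) / (1 - d)) => X Y; lra.
set c := (1 - d) * (b1 - b2) / (6 * M).
have c0 : 0 <= c by rewrite /c; apply: divr_ge0; nra.
have hc : c * (3 * M / (1 - d)) = (b1 - b2) / 2 by rewrite /c; field; lra.
have hcD : c * ((1 + r) * D) <= (b1 - b2) / 2 by rewrite -hc; apply: ler_wpM2l.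
clearbody c N D.
have h5 : (1 + r) * (r * c * D) <= r * ((b1 - b2) / 2).
  have -> : (1 + r) * (r * c * D) = r * (c * ((1 + r) * D)) by ring.
  by apply: ler_wpM2l; lra.
have h6 : 0 <= (1 + r) * (N - r * D - r * c * D).
  have -> : (1 + r) * (N - r * D - r * c * D) = (1 + r) * (N - r * D) - (1 + r) * (r * c * D) by ring.
  have : 0 <= r * (b1 - b2) by apply: mulr_ge0; lra.
  have h5' : (1 + r) * (r * c * D) <= r * (b1 - b2) / 2 by move: h5; rewrite [r * ((b1 - b2) / 2)]mulrA.
  move: hN h5'; move: ((1 + r) * (N - r * D)) ((1 + r) * (r * c * D)) (r * (b1 - b2)) => X Y Z.
  move=> *; lra.
have h7 : 0 <= N - r * D - r * c * D by move: h6; rewrite pmulr_rge0 //; lra.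
move: h7; have -> : r * (1 + c) * D = r * D + r * c * D by ring.
move: (r * D) (r * c * D) => X Y; lra.
Qed.


Lemma bigmin_le (R : realType) (I : finType) (P : pred I) (F : I -> R) x i0 :
  P i0 -> \big[Num.min/x]_(i | P i) F i <= F i0.
Proof.
have : i0 \in index_enum I by rewrite mem_index_enum.
elim: (index_enum I) => // a s IH; rewrite big_cons inE => /orP[/eqP <-|hs] hP.
  by rewrite hP ge_min lexx.
case: ifP => _; last exact: IH.
by rewrite ge_min IH ?orbT.
Qed.

Lemma bigmax_ge (R : realType) (I : finType) (P : pred I) (F : I -> R) x i0 :
  P i0 -> F i0 <= \big[Num.max/x]_(i | P i) F i.
Proof.
have : i0 \in index_enum I by rewrite mem_index_enum.
elim: (index_enum I) => // a s IH; rewrite big_cons inE => /orP[/eqP <-|hs] hP.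
  by rewrite hP le_max lexx.
case: ifP => _; last exact: IH.
by rewrite le_max IH ?orbT.
Qed.

Section Dyn.
Variables (R : realType) (m n : nat) (l : TPV m n -> R) (delta : R)
    (p : nat -> TPV m n -> TPV m n -> R) (f b : nat -> TPV m n -> R).
Hypotheses (m0 : (0 < m)%N) (mn : (m < n)%N) (dl0 : 0 < delta) (dl1 : delta < 1)
  (hl : forall v, l v = 0)
  (htr : is_trajectory (@TPE m n) src dst l delta p f b)
  (hp0 : forall u v, TPE u v -> 0 < p 0%N u v)
  (hf : forall t : nat, 0 < f t src /\ f t src <= f t.+1 src)
  (hb : forall t : nat, 0 < b t dst /\ b t dst <= b t.+1 dst)
  (hf0 : forall v, v != src -> v != dst -> 0 <= f 0%N v /\ f 0%N v <= f 0%N src)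
  (hb0 : forall v, v != src -> v != dst -> 0 <= b 0%N v /\ b 0%N v <= b 0%N dst).

Local Notation E := (@TPE m n).
Local Notation V := (TPV m n).

Lemma fstep t v : v != src -> f t.+1 v = \sum_(z | E z v) fedge E (p t) (f t) z v.
Proof. by move=> hv; case: (htr t) => H _; rewrite H // hl subr0 mul1r. Qed.
Lemma bstep t u : u != dst -> b t.+1 u = \sum_(z | E u z) bedge E (p t) (b t) u z.
Proof. by move=> hv; case: (htr t) => _ [H _]; rewrite H // hl subr0 mul1r. Qed.
Lemma pstep t u v : E u v ->
  p t.+1 u v = delta * (p t u v + fedge E (p t) (f t) u v + bedge E (p t) (b t) u v).
Proof. by move=> huv; case: (htr t) => _ [_ H]; rewrite H. Qed.

Lemma sum1 (F : V -> R) (P : pred V) u : (forall z, P z = (z == u)) ->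
  \sum_(z | P z) F z = F u.
Proof. by move=> H; rewrite (eq_bigl (fun z => z == u)) ?big_pred1_eq. Qed.

Lemma card1P (P : pred V) u : (forall z, P z = (z == u)) -> #|[pred z | P z]| == 1%N.
Proof. by move=> H; rewrite (@eq_card _ _ (pred1 u)) ?card1 // => z; rewrite !inE H. Qed.

Lemma sum2 (F : V -> R) (P : pred V) u w : u != w -> (forall z, P z = (z == u) || (z == w)) ->
  \sum_(z | P z) F z = F u + F w.
Proof.
move=> uw H; rewrite (bigD1 u) ?H ?eqxx //=; congr (_ + _).
apply: sum1 => z; rewrite H; case: (eqVneq z u) => [->|] /=; last by rewrite andbT.
by rewrite (negbTE uw).
Qed.

Lemma card2P (P : pred V) u w : u != w -> (forall z, P z = (z == u) || (z == w)) ->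
  #|[pred z | P z]| = 2%N.
Proof.
move=> uw H; rewrite (@eq_card _ _ (pred2 u w)) ?card2 ?uw // => z; by rewrite !inE H.
Qed.

Lemma fedge_bd (P : V -> V -> R) (F : V -> R) u v : E u v ->
  (forall z, E u z -> 0 < P u z) -> 0 <= F u -> 0 <= fedge E P F u v <= F u.
Proof.
move=> huv hP hF; rewrite /fedge; case: ifP => _; first by rewrite hF lexx.
have hS : P u v <= \sum_(z | E u z) P u z.
  rewrite (bigD1 v) //= lerDl; apply: sumr_ge0 => z /andP[hz _]; exact: ltW (hP z hz).
have hp := hP v huv; have hS0 : 0 < \sum_(z | E u z) P u z by exact: lt_le_trans hS.
apply/andP; split; first by rewrite divr_ge0 // ?mulr_ge0 // ltW.
by rewrite ler_pdivrMr // ler_wpM2l.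
Qed.

Lemma bedge_bd (P : V -> V -> R) (F : V -> R) u v : E u v ->
  (forall z, E z v -> 0 < P z v) -> 0 <= F v -> 0 <= bedge E P F u v <= F v.
Proof.
move=> huv hP hF; rewrite /bedge; case: ifP => _; first by rewrite hF lexx.
have hS : P u v <= \sum_(z | E z v) P z v.
  rewrite (bigD1 u) //= lerDl; apply: sumr_ge0 => z /andP[hz _]; exact: ltW (hP z hz).
have hp := hP u huv; have hS0 : 0 < \sum_(z | E z v) P z v by exact: lt_le_trans hS.
apply/andP; split; first by rewrite divr_ge0 // ?mulr_ge0 // ltW.
by rewrite ler_pdivrMr // ler_wpM2l.
Qed.

Definition Inv t :=
  (forall v, v != dst -> 0 <= f t v <= f t src) /\
  (forall v, v != src -> 0 <= b t v <= b t dst) /\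
  (forall u v, E u v -> 0 < p t u v).

Lemma edge_bds t : Inv t -> forall u v, E u v ->
  (0 <= fedge E (p t) (f t) u v <= f t src) /\ (0 <= bedge E (p t) (b t) u v <= b t dst).
Proof.
move=> [If [Ib Ip]] u v huv.
have hu : u != dst by apply/eqP => hu; move: huv; rewrite hu (@E_dst_out m n m0 mn).
have hv : v != src by apply/eqP => hv; move: huv; rewrite hv E_src_in.
have /andP[f0 f1] := If u hu; have /andP[b0 b1] := Ib v hv.
have /andP[e0 e1] := @fedge_bd (p t) (f t) u v huv (fun z hz => Ip u z hz) f0.
have /andP[g0 g1] := @bedge_bd (p t) (b t) u v huv (fun z hz => Ip z v hz) b0.
by rewrite e0 g0 (le_trans e1 f1) (le_trans g1 b1).
Qed.

Lemma inv t : Inv t.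
Proof.
elim: t => [|t [If [Ib Ip]]].
- split; [|split] => //.
  + move=> v hv; case: (eqVneq v src) => [->|vs]; first by rewrite lexx ltW //; case: (hf 0%N).
    by case: (hf0 v vs hv) => -> ->.
  + move=> v hv; case: (eqVneq v dst) => [->|vd]; first by rewrite lexx ltW //; case: (hb 0%N).
    by case: (hb0 v hv vd) => -> ->.
have EB := edge_bds t (conj If (conj Ib Ip)).
case: (hf t) => hft hft1; case: (hb t) => hbt hbt1.
split; [|split].
- move=> v hv; case: (eqVneq v src) => [->|vs].
    by rewrite lexx ltW //; case: (hf t.+1).
  have [u [hu Hu]] := @int_in m n m0 mn v vs hv.
  have huv : E u v by rewrite Hu.
  rewrite fstep // (sum1 _ _ _ Hu). case: (EB u v huv) => /andP[-> h] _ /=.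
  exact: le_trans hft1.
- move=> v hv; case: (eqVneq v dst) => [->|vd].
    by rewrite lexx ltW //; case: (hb t.+1).
  have [w [hw Hw]] := @int_out m n m0 mn v hv vd.
  have hvw : E v w by rewrite Hw.
  rewrite bstep // (sum1 _ _ _ Hw). case: (EB v w hvw) => _ /andP[-> h] /=.
  exact: le_trans hbt1.
- move=> u v huv; rewrite pstep //; case: (EB u v huv) => /andP[e0 _] /andP[g0 _].
  apply: mulr_gt0 => //; rewrite -addrA; apply: ltr_wpDr => //; first by rewrite addr_ge0.
  exact: Ip.
Qed.

Ltac lrad := let h1 := fresh in let h2 := fresh in have h1 := dl0; have h2 := dl1; lra.

Definition Ms t := f t src + b t dst.

Lemma pbd t u v : E u v ->
  p t u v <= delta ^+ t * p 0%N u v + delta / (1 - delta) * Ms t.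
Proof.
elim: t u v => [|t IH] u v huv.
  rewrite expr0 mul1r lerDl; apply: mulr_ge0; last first.
    by apply: addr_ge0; apply: ltW; [case: (hf 0%N)|case: (hb 0%N)].
  by apply: divr_ge0; [exact: ltW|lrad].
set c := delta / (1 - delta).
have key : delta * (c + 1) = c by rewrite /c; field; lrad.
have c0 : 0 <= c by apply: divr_ge0; [exact: ltW|lrad].
have [/andP[e0 e1] /andP[g0 g1]] := edge_bds t (inv t) u v huv.
have IHt := IH u v huv.
have hM : Ms t <= Ms t.+1 by rewrite /Ms; apply: lerD; [case: (hf t)|case: (hb t)].
rewrite pstep // exprS -mulrA.
set X := delta ^+ t * p 0%N u v in IHt *.
apply: (le_trans (y := delta * (X + c * Ms t + Ms t))).
  apply: ler_wpM2l; [exact: ltW| apply: (le_trans (lerD (lerD IHt e1) g1)); by rewrite /Ms addrA].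
have -> : delta * (X + c * Ms t + Ms t) = delta * X + (delta * (c + 1)) * Ms t by ring.
rewrite key; apply: lerD => //; exact: ler_wpM2l.
Qed.

Definition e1 t k := bedge E (p t) (b t) (pos1 m n k) (pos1 m n k.+1).
Definition e2 t k := bedge E (p t) (b t) (pos2 m n k) (pos2 m n k.+1).

Lemma e1_step t k : (k.+1 < m)%N -> e1 t.+1 k = e1 t k.+1.
Proof.
move=> hk; have hk' : (k < m.-1)%N by lia.
have hv : pos1 m n k.+1 = inr (inl (Ordinal hk')) by apply/eqP; rewrite pos1_int.
rewrite /e1 hv /bedge (card1P _ _ (@E_int1_in m n m0 mn (Ordinal hk'))).
rewrite bstep // (sum1 _ _ _ (@E_int1_out m n m0 mn (Ordinal hk'))) /=.
by rewrite /bedge.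
Qed.

Lemma e2_step t k : (k.+1 < n)%N -> e2 t.+1 k = e2 t k.+1.
Proof.
move=> hk; have hk' : (k < n.-1)%N by lia.
have hv : pos2 m n k.+1 = inr (inr (Ordinal hk')) by apply/eqP; rewrite pos2_int.
rewrite /e2 hv /bedge (card1P _ _ (@E_int2_in m n m0 mn (Ordinal hk'))).
rewrite bstep // (sum1 _ _ _ (@E_int2_out m n m0 mn (Ordinal hk'))) /=.
by rewrite /bedge.
Qed.

Lemma e1_chain j : (j < m)%N -> forall t, e1 (t + j) 0 = e1 t j.
Proof.
elim: j => [|j IH] hj t; first by rewrite addn0.
by rewrite -addSnnS IH ?e1_step //; lia.
Qed.

Lemma e2_chain j : (j < n)%N -> forall t, e2 (t + j) 0 = e2 t j.
Proof.
elim: j => [|j IH] hj t; first by rewrite addn0.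
by rewrite -addSnnS IH ?e2_step //; lia.
Qed.

Definition qd (t : nat) (w : V) := p t w dst / (p t (d1 m n) dst + p t (d2 m n) dst).

Lemma bedge_dst t w : (w == d1 m n) || (w == d2 m n) ->
  bedge E (p t) (b t) w dst = b t dst * qd t w.
Proof.
move=> _; rewrite /bedge (card2P _ _ _ (@d12_neq m n m0 mn) (@E_dst m n m0 mn)) /=.
by rewrite (sum2 _ _ _ _ (@d12_neq m n m0 mn) (@E_dst m n m0 mn)) mulrA.
Qed.

Lemma e1_end t : e1 t m.-1 = b t dst * qd t (d1 m n).
Proof.
rewrite /e1 prednK // -(bedge_dst t (d1 m n)) ?eqxx //.
by have /eqP-> : pos1 m n m == dst by rewrite pos1_dst.
Qed.

Lemma e2_end t : e2 t n.-1 = b t dst * qd t (d2 m n).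
Proof.
rewrite /e2 prednK ?(leq_trans m0 (ltnW mn)) // -(bedge_dst t (d2 m n)) ?eqxx ?orbT //.
by have /eqP-> : pos2 m n n == dst by rewrite pos2_dst.
Qed.

Lemma fedge_src t w : (w == s1 m n) || (w == s2 m n) ->
  fedge E (p t) (f t) src w = f t src * (p t src w / (p t src (s1 m n) + p t src (s2 m n))).
Proof.
move=> _; rewrite /fedge (card2P _ _ _ (@s12_neq m n m0 mn) (@E_src m n m0 mn)) /=.
by rewrite (sum2 _ _ _ _ (@s12_neq m n m0 mn) (@E_src m n m0 mn)) mulrA.
Qed.

Lemma b_mono i j : (i <= j)%N -> b i dst <= b j dst.
Proof.
move=> /subnK <-; elim: (j - i)%N => [|k IH]; first by rewrite add0n.
by apply: (le_trans IH); rewrite addSn; case: (hb (k + i)%N).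
Qed.

Lemma Ms_mono i j : (i <= j)%N -> Ms i <= Ms j.
Proof.
move=> /subnK <-; elim: (j - i)%N => [|k IH]; first by rewrite add0n.
apply: (le_trans IH); rewrite addSn /Ms; apply: lerD; [case: (hf (k + i)%N)|case: (hb (k + i)%N)] => //.
Qed.

Lemma E_s1 : E src (s1 m n). Proof. by rewrite (@E_src m n m0 mn) eqxx. Qed.
Lemma E_s2 : E src (s2 m n). Proof. by rewrite (@E_src m n m0 mn) eqxx orbT. Qed.
Lemma E_d1 : E (d1 m n) dst. Proof. by rewrite (@E_dst m n m0 mn) eqxx. Qed.
Lemma E_d2 : E (d2 m n) dst. Proof. by rewrite (@E_dst m n m0 mn) eqxx orbT. Qed.

Lemma rmin_pos t : 0 < r_min p t.
Proof.
have pp := (inv _).2.2.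
have hs : forall k, 0 < r_ss1 p k by move=> k; rewrite /r_ss1 divr_gt0 // pp // (E_s1, E_s2).
have hd : forall k, 0 < r_d1d p k by move=> k; rewrite /r_d1d divr_gt0 // pp // (E_d1, E_d2).
rewrite /r_min; apply: (big_ind (fun x => 0 < x)) => //.
  by move=> x y hx hy; rewrite lt_min hx hy.
by move=> i _; rewrite lt_min hs hd.
Qed.

Lemma rmin_d t i : (i < Lmax m n)%N -> r_min p t <= r_d1d p (t - i).
Proof.
move=> hi; apply: (le_trans (@bigmin_le R _ xpredT (fun i : 'I_(Lmax m n) => Num.min (r_ss1 p (t - i)) (r_d1d p (t - i))) (r_ss1 p t) (Ordinal hi) isT)) => //=.
by rewrite ge_min lexx orbT.
Qed.

Lemma rmin_s t : r_min p t <= r_ss1 p t.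
Proof.
have hi : (0 < Lmax m n)%N by rewrite /Lmax; lia.
apply: (le_trans (@bigmin_le R _ xpredT (fun i : 'I_(Lmax m n) => Num.min (r_ss1 p (t - i)) (r_d1d p (t - i))) (r_ss1 p t) (Ordinal hi) isT)) => //=.
by rewrite subn0 ge_min lexx.
Qed.

Lemma T1_bound t u v : E u v -> T1 delta p f b <= t%:R ->
  delta ^+ t * p 0%N u v <= Ms 0%N.
Proof.
move=> huv hT.
have M0 : 0 < Ms 0%N by rewrite /Ms; apply: addr_gt0; [case: (hf 0%N)|case: (hb 0%N)].
have p0 := hp0 u v huv.
have hg := @bigmax_ge R _ (fun e : V * V => E e.1 e.2) (fun e : V * V => ln (p 0%N e.1 e.2 / (f 0%N src + b 0%N dst)) / ln (1 / delta))
  (ln (p 0%N src (s1 m n) / (f 0%N src + b 0%N dst)) / ln (1 / delta)) (u, v) huv.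
have hg' := le_trans hg hT.
have L0 : 0 < ln (1 / delta) by apply: ln_gt0; rewrite ltr_pdivlMr // mul1r.
have id0 : 0 < 1 / delta by rewrite divr_gt0.
rewrite /= ler_pdivrMr // in hg'.
rewrite mulr_natl -(lnXn t id0) in hg'.
have hx : 0 < p 0%N u v / (f 0%N src + b 0%N dst) by rewrite divr_gt0.
rewrite ler_ln ?posrE ?exprn_gt0 // in hg'.
rewrite ler_pdivrMr // in hg'.
apply: (le_trans (ler_wpM2l (exprn_ge0 t (ltW dl0)) hg')).
rewrite mulrA -exprMn mul1r divff ?expr1n ?mul1r //; exact: lt0r_neq0.
Qed.

Lemma key t : (Lmax m n)%:R + Num.max 0 (T1 delta p f b) <= t%:R ->
  r_min p t * (1 + (1 - delta) * (b (t - m).+1 dst - b (t - n).+1 dst)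
     / (6 * (f t src + b t dst))) <= r_ss1 p t.+1.
Proof using All.
move=> ht.
have hmx : 0 <= Num.max 0 (T1 delta p f b) by rewrite le_max lexx.
have hT : T1 delta p f b <= t%:R.
  apply: le_trans ht; apply: (le_trans (y := Num.max 0 (T1 delta p f b))).
    by rewrite le_max lexx orbT.
  by rewrite lerDr.
have hL : (Lmax m n <= t)%N.
  by rewrite -(ler_nat R); apply: le_trans ht; rewrite lerDl.
rewrite /Lmax in hL.
have em : (t - m).+1 = (t - m.-1)%N by lia.
have en : (t - n).+1 = (t - n.-1)%N by lia.
rewrite em en.
set t1 := (t - m.-1)%N; set t2 := (t - n.-1)%N.
have pp := (inv t).2.2.
have pp1 := (inv t1).2.2.
have pp2 := (inv t2).2.2.
rewrite /r_ss1 !pstep ?E_s1 ?E_s2 //.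
rewrite !fedge_src ?eqxx ?orbT //.
change (bedge E (p t) (b t) src (s1 m n)) with (e1 t 0).
change (bedge E (p t) (b t) src (s2 m n)) with (e2 t 0).
have -> : e1 t 0 = b t1 dst * qd t1 (d1 m n).
  have hj : (m.-1 < m)%N by lia.
  have hj' : (m.-1 <= t)%N by lia.
  by have := e1_chain _ hj t1; rewrite /t1 subnK // => ->; exact: e1_end.
have -> : e2 t 0 = b t2 dst * qd t2 (d2 m n).
  have hj : (n.-1 < n)%N by lia.
  have hj' : (n.-1 <= t)%N by lia.
  by have := e2_chain _ hj t2; rewrite /t2 subnK // => ->; exact: e2_end.
rewrite /qd.
have hs := rmin_s t.
have hd1 : r_min p t <= r_d1d p t1 by apply: rmin_d; rewrite /Lmax; lia.
have hd2 : r_min p t <= r_d1d p t2 by apply: rmin_d; rewrite /Lmax; lia.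
apply: final_ineq.
- exact: dl0.
- exact: dl1.
- exact: rmin_pos.
- exact: pp E_s1.
- exact: pp E_s2.
- by case: (hf t).
- by case: (hb t).
- by apply: ltW; case: (hb t2).
- by apply: b_mono; rewrite /t1 /t2; lia.
- by apply: b_mono; rewrite /t1; lia.
- exact: pp1 E_d1.
- exact: pp1 E_d2.
- exact: pp2 E_d1.
- exact: pp2 E_d2.
- by rewrite -ler_pdivlMr ?pp ?E_s2.
- move: hd1; rewrite /r_d1d.
  by rewrite ler_pdivlMr ?pp1 ?E_d2.
- move: hd2; rewrite /r_d1d.
  by rewrite ler_pdivlMr ?pp2 ?E_d2.
- have hb1 : forall u v, E u v -> p t u v <= Ms t / (1 - delta).
    move=> u v huv; apply: le_trans (pbd t u v huv) _.
    have h1 := T1_bound t u v huv hT.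
    have h2 := Ms_mono 0 t (leq0n t).
    have e : Ms t / (1 - delta) = Ms t + delta / (1 - delta) * Ms t.
      by field; lrad.
    rewrite e; apply: lerD => //; exact: le_trans h1 h2.
  have -> : 2 * (f t src + b t dst) / (1 - delta) = Ms t / (1 - delta) + Ms t / (1 - delta).
    by rewrite -mulrDl /Ms; congr (_ * _); ring.
  by apply: lerD; apply: hb1; [exact: E_s1|exact: E_s2].
Qed.

End Dyn.


Theorem mainTheorem13 (R : realType) (m n : nat) (l : TPV m n -> R) (delta : R)
    (p : nat -> TPV m n -> TPV m n -> R) (f b : nat -> TPV m n -> R) :
  (0 < m)%N -> (m < n)%N ->
  0 < delta -> delta < 1 ->
  (forall v, l v = 0) ->
  is_trajectory (@TPE m n) src dst l delta p f b ->
  (forall u v, TPE u v -> 0 < p 0%N u v) ->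
  (forall t : nat, 0 < f t src /\ f t src <= f t.+1 src) ->
  (forall t : nat, 0 < b t dst /\ b t dst <= b t.+1 dst) ->
  (forall v, v != src -> v != dst -> 0 <= f 0%N v /\ f 0%N v <= f 0%N src) ->
  (forall v, v != src -> v != dst -> 0 <= b 0%N v /\ b 0%N v <= b 0%N dst) ->
  forall t : nat, (Lmax m n)%:R + Num.max 0 (T1 delta p f b) <= t%:R ->
    r_ss1 p t.+1 >=
    r_min p t * (1 + (1 - delta) * (b (t - m).+1 dst - b (t - n).+1 dst)
                     / (6 * (f t src + b t dst))).
Proof. exact: key. Qed.
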